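(* Let $G=(V,E)$ be a graph, $d=(d(v):v\in V)$ an integer sequence, and $\mathcal{C}\in\mathcal{K}(d)$, and let $e\in E$. If $(G,\mathcal{C})$ has a CAW through $e$, then for every $\mathcal{C}'\in\mathcal{K}(d)$, $(G,\mathcal{C}')$ has a CAW through $e$.
   Context: Graphs are finite, undirected, may have parallel edges but no loops. $\mathcal{K}(d)$ is the set of all colorings $\mathcal{C}:E\to\{R,B\}$ (red/blue) such that the number of red edges incident with $v$ equals $d(v)$ for every $v\in V$. A walk $(v_0,e_1,v_1,\dots,e_m,v_m)$ is a closed alternating walk (CAW) if $v_0=v_m$, $\mathcal{C}(e_j)\ne\mathcal{C}(e_{j+1})$ for $j=1,\dots,m-1$, and $\mathcal{C}(e_m)\ne\mathcal{C}(e_1)$. A CAW is through $e$ if $e$ is one of its edges $e_j$. *)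

(* Defs.v *)
From mathcomp Require Import all_boot all_order all_algebra.
Set Implicit Arguments. Unset Strict Implicit. Unset Printing Implicit Defensive.

(* A (multi)graph G = (V, E): finite vertex type V, finite edge type E,
   and an endpoint map [ends : E -> V * V]; parallel edges are allowed
   (distinct edges may have equal endpoints).  Looplessness is a hypothesis
   [loopless ends].  A colouring is [C : {ffun E -> bool}], with
   [true] = red and [false] = blue. *)

Section Graphs.
Variables (V E : finType) (ends : E -> V * V).

Definition loopless : Prop := forall e : E, (ends e).1 != (ends e).2.

Definition incident (e : E) (v : V) : bool :=
  (v == (ends e).1) || (v == (ends e).2).

Definition joins (e : E) (x y : V) : bool :=
  (ends e == (x, y)) || (ends e == (y, x)).

Definition inK (d : V -> int) (C : {ffun E -> bool}) : Prop :=
  forall v : V, (#|[set e : E | incident e v && C e]| : int) = d v.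

(* A walk (v0, e1, v1, ..., em, vm) is encoded by v0 and the sequence
   [:: (e1, v1); ...; (em, vm)]. *)
Fixpoint is_walk (x : V) (s : seq (E * V)) : bool :=
  if s is (e, y) :: s' then joins e x y && is_walk y s' else true.

Definition is_CAW (C : {ffun E -> bool}) (v0 : V) (s : seq (E * V)) : bool :=
  [&& is_walk v0 s,
      last v0 [seq p.2 | p <- s] == v0 &
      cycle (fun p q : E * V => C p.1 != C q.1) s].

Definition has_CAW_through (C : {ffun E -> bool}) (e : E) : Prop :=
  exists (v0 : V) (s : seq (E * V)),
    is_CAW C v0 s /\ e \in [seq p.1 | p <- s].

End Graphs.

(* Main.v *)
Require Import Defs.
From mathcomp Require Import all_boot all_order all_algebra.
Set Implicit Arguments. Unset Strict Implicit. Unset Printing Implicit Defensive.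

Definition tl (V E : finType) (ends : E -> V * V) (C : {ffun E -> bool}) (f : E) (k : bool) : V * bool :=
  if C f == k then ((ends f).1, k) else ((ends f).2, ~~ k).
Definition hd (V E : finType) (ends : E -> V * V) (C : {ffun E -> bool}) (f : E) (k : bool) : V * bool :=
  if C f == k then ((ends f).2, ~~ k) else ((ends f).1, k).
Definition harc (V E : finType) (ends : E -> V * V) (C : {ffun E -> bool}) : rel (V * bool) :=
  fun s t => [exists f : E, [exists k : bool, (tl ends C f k == s) && (hd ends C f k == t)]].

Fixpoint awalk (V E : finType) (ends : E -> V * V) (C : {ffun E -> bool}) (st : V * bool) (s : seq (E * V)) : bool :=
  if s is (f, y) :: s' then [&& joins ends f st.1 y, C f == st.2 & awalk ends C (y, ~~ C f) s'] else true.

Definition gst (V E : finType) (C : {ffun E -> bool}) (p : E * V) : V * bool := (p.2, ~~ C p.1).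

Definition endst (V E : finType) (C : {ffun E -> bool}) (st : V * bool) (s : seq (E * V)) :=
  last st [seq gst C p | p <- s].

Lemma tl2 (V E : finType) (ends : E -> V * V) (C : {ffun E -> bool}) f k : (tl ends C f k).2 = C f.
Proof. by rewrite /tl; case: (C f) k => [] []. Qed.
Lemma hd2 (V E : finType) (ends : E -> V * V) (C : {ffun E -> bool}) f k : (hd ends C f k).2 = ~~ C f.
Proof. by rewrite /hd; case: (C f) k => [] []. Qed.
Lemma tlhd_joins (V E : finType) (ends : E -> V * V) (C : {ffun E -> bool}) f k :
  joins ends f (tl ends C f k).1 (hd ends C f k).1.
Proof.
rewrite /joins /tl /hd; case: (C f == k) => /=; case: (ends f) => a b /=;
by rewrite eqxx ?orbT.
Qed.

Lemma joins_arc (V E : finType) (ends : E -> V * V) (C : {ffun E -> bool}) f u w :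
  joins ends f u w -> exists k, tl ends C f k = (u, C f) /\ hd ends C f k = (w, ~~ C f).
Proof.
rewrite /joins /tl /hd => /orP [] /eqP ->.
  by exists (C f); rewrite eqxx.
exists (~~ C f); case: (C f) => /=; by [].
Qed.

Lemma awalk_connect (V E : finType) (ends : E -> V * V) (C : {ffun E -> bool}) s st :
  awalk ends C st s -> connect (harc ends C) st (endst C st s).
Proof.
elim: s st => [|[f y] s IH] st /=; first by rewrite /endst /= connect0.
move=> /and3P [hj /eqP hc hw].
apply: (connect_trans _ (IH _ hw)).
apply: connect1; have [k [h1 h2]] := joins_arc C hj.
apply/existsP; exists f; apply/existsP; exists k.
by rewrite h1 h2 hc -surjective_pairing !eqxx.
Qed.

Lemma path_awalk (V E : finType) (ends : E -> V * V) (C : {ffun E -> bool}) p st :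
  path (harc ends C) st p -> exists s, awalk ends C st s /\ endst C st s = last st p.
Proof.
elim: p st => [|q p IH] st /=; first by move=> _; exists [::].
move=> /andP [/existsP [f /existsP [k /andP [/eqP ht /eqP hh]]] hp].
have [s [hs he]] := IH _ hp.
exists ((f, q.1) :: s) => /=.
have hq : (q.1, ~~ C f) = q by rewrite -(hd2 ends C f k) -hh -surjective_pairing.
rewrite hq hs andbT; split.
  by rewrite -ht -hh tl2 eqxx andbT tlhd_joins.
by rewrite -he /endst /= /gst /= hq.
Qed.

Lemma awalk_walk (V E : finType) (ends : E -> V * V) (C : {ffun E -> bool}) s st :
  awalk ends C st s -> is_walk ends st.1 s.
Proof.
elim: s st => [|[f y] s IH] st //= /and3P [-> _ /IH] //.
Qed.

Lemma awalk_path (V E : finType) (ends : E -> V * V) (C : {ffun E -> bool}) s u f0 w :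
  awalk ends C (u, ~~ C f0) s -> path (fun p q : E * V => C p.1 != C q.1) (f0, w) s.
Proof.
elim: s u f0 w => [|[f y] s IH] u f0 w //= /and3P [_ /eqP hc /IH ->].
by rewrite andbT /= hc; case: (C f0).
Qed.

Lemma walk_awalk (V E : finType) (ends : E -> V * V) (C : {ffun E -> bool}) s u f0 w :
  is_walk ends u s -> path (fun p q : E * V => C p.1 != C q.1) (f0, w) s ->
  awalk ends C (u, ~~ C f0) s.
Proof.
elim: s u f0 w => [|[f y] s IH] u f0 w //= /andP [-> hw] /andP [hc hp] /=.
rewrite (IH _ _ _ hw hp) andbT; move: hc => /=; by case: (C f0); case: (C f).
Qed.

Lemma is_walk_cat (V E : finType) (ends : E -> V * V) u s1 s2 :
  is_walk ends u (s1 ++ s2) = is_walk ends u s1 && is_walk ends (last u [seq p.2 | p <- s1]) s2.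
Proof.
elim: s1 u => [|[f y] s IH] u //=; by rewrite IH andbA.
Qed.

Definition deg (V E : finType) (ends : E -> V * V) (C : {ffun E -> bool}) (s : V * bool) : nat :=
  \sum_(f : E) (incident ends f s.1 && (C f == s.2)).

Lemma deg_true (V E : finType) (ends : E -> V * V) (C : {ffun E -> bool}) v :
  deg ends C (v, true) = #|[set e : E | incident ends e v && C e]|.
Proof.
rewrite /deg -sum1_card [RHS]big_mkcond /=; apply: eq_bigr => f _.
by rewrite inE eqb_id; case: (_ && _).
Qed.

Lemma deg_split (V E : finType) (ends : E -> V * V) (C : {ffun E -> bool}) v :
  deg ends C (v, true) + deg ends C (v, false) = \sum_(f : E) incident ends f v.
Proof.
rewrite /deg -big_split /=; apply: eq_bigr => f _.
by case: (incident _ _ _); case: (C f).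
Qed.

Lemma deg_eq (V E : finType) (ends : E -> V * V) (d : V -> int) (C C' : {ffun E -> bool}) :
  inK ends d C -> inK ends d C' -> forall s, deg ends C s = deg ends C' s.
Proof.
move=> HC HC' [v c].
have ht : deg ends C (v, true) = deg ends C' (v, true).
  have := HC v; rewrite -(HC' v) !deg_true => -[] //.
case: c => //.
have := deg_split ends C v; have := deg_split ends C' v; rewrite ht => <-.
by move/addnI.
Qed.

Lemma cnt (V E : finType) (ends : E -> V * V) (Hloop : loopless ends) (C : {ffun E -> bool})
  (S : {set V * bool}) :
  \sum_(f : E) \sum_(k : bool) (tl ends C f k \in S) = \sum_(s in S) deg ends C s.
Proof.
rewrite /deg.
transitivity (\sum_(s : V * bool) \sum_(f : E) ((s \in S) && (incident ends f s.1 && (C f == s.2)) : nat)).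
  rewrite [RHS]exchange_big /=; apply: eq_bigr => f _.
  transitivity (\sum_(v : V) \sum_(c : bool) (((v, c) \in S) && (incident ends f v && (C f == c)) : nat)); last first.
    by rewrite pair_bigA; apply: eq_bigr => -[v c] _.
  have hl := Hloop f.
  transitivity (\sum_(v : V) ((incident ends f v) && ((v, C f) \in S) : nat)).
    rewrite [RHS](bigD1 (ends f).1) // [X in _ = _ + X](bigD1 (ends f).2) /=; last by rewrite eq_sym.
    rewrite [X in _ = _ + (_ + X)]big1; last first.
      move=> v /andP [h1 h2]; rewrite /incident (negbTE h1) (negbTE h2) //.
    rewrite /incident !eqxx /= orbT /= addn0 big_bool /= /tl.
    by case: (C f) => /=; rewrite addnC.
  apply: eq_bigr => v _; rewrite big_bool /=.
  by case: (C f); case: (incident _ _ _); rewrite ?andbF ?andbT /= ?addn0.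
rewrite [RHS]big_mkcond /=; apply: eq_bigr => s _.
case: (s \in S) => /=; last by rewrite big1.
by [].
Qed.

Lemma closed_transfer (V E : finType) (ends : E -> V * V) (Hloop : loopless ends) (d : V -> int)
  (C C' : {ffun E -> bool}) (HC : inK ends d C) (HC' : inK ends d C') (S : {set V * bool}) :
  (forall f k, tl ends C' f k \in S -> hd ends C' f k \in S) ->
  (forall f k, tl ends C f k \in S -> hd ends C f k \in S).
Proof.
move=> Hcl.
have both : forall (D : {ffun E -> bool}) f k,
  (tl ends D f k \in S) && (hd ends D f k \in S) =
  (((ends f).1, k) \in S) && (((ends f).2, ~~ k) \in S).
  by move=> D f k; rewrite /tl /hd; case: (D f == k) => //; rewrite andbC.
have split : forall (D : {ffun E -> bool}),
  \sum_(f : E) \sum_(k : bool) (tl ends D f k \in S) =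
  \sum_(f : E) \sum_(k : bool) ((((ends f).1, k) \in S) && (((ends f).2, ~~ k) \in S) : nat)
  + \sum_(f : E) \sum_(k : bool) ((tl ends D f k \in S) && (hd ends D f k \notin S) : nat).
  move=> D; rewrite -big_split /=; apply: eq_bigr => f _.
  rewrite -big_split /=; apply: eq_bigr => k _; rewrite -(both D).
  by case: (tl _ _ _ _ \in S); case: (hd _ _ _ _ \in S).
have L0 : \sum_(f : E) \sum_(k : bool) ((tl ends C' f k \in S) && (hd ends C' f k \notin S) : nat) = 0.
  apply: big1 => f _; apply: big1 => k _.
  by case h: (tl _ _ _ _ \in S) => //=; rewrite Hcl.
have E1 := split C; have E2 := split C'.
rewrite !cnt // in E1 E2.
have hdeg : \sum_(s in S) deg ends C s = \sum_(s in S) deg ends C' s.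
  by apply: eq_bigr => s _; apply: deg_eq HC HC' s.
rewrite hdeg E2 L0 addn0 in E1.
move=> f k htl; apply/negPn/negP => hn.
have : \sum_(f : E) \sum_(k : bool) ((tl ends C f k \in S) && (hd ends C f k \notin S) : nat) = 0.
  by move: E1 => /eqP; rewrite -{1}(addn0 (\sum_(f : E) _)) eqn_add2l => /eqP <-.
move/eqP; rewrite sum_nat_eq0 => /forallP /(_ f) /implyP /(_ isT).
rewrite sum_nat_eq0 => /forallP /(_ k) /implyP /(_ isT).
by rewrite htl hn.
Qed.

Lemma transfer_connect (V E : finType) (ends : E -> V * V) (Hloop : loopless ends) (d : V -> int)
  (C C' : {ffun E -> bool}) (HC : inK ends d C) (HC' : inK ends d C') u w :
  connect (harc ends C) u w -> connect (harc ends C') u w.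
Proof.
set S := [set t | connect (harc ends C') u t].
have Hcl : forall f k, tl ends C' f k \in S -> hd ends C' f k \in S.
  move=> f k; rewrite !inE => h; apply: (connect_trans h); apply: connect1.
  by apply/existsP; exists f; apply/existsP; exists k; rewrite !eqxx.
have Hcl2 := closed_transfer Hloop HC HC' Hcl.
have hu : u \in S by rewrite inE connect0.
have gen : forall p t, t \in S -> path (harc ends C) t p -> last t p \in S.
  elim=> [|q p IH] t //= ht0.
  move=> /andP [/existsP [f /existsP [k /andP [/eqP ht /eqP hh]]] hp].
  apply: IH => //; rewrite -hh; apply: Hcl2; by rewrite ht.
move=> /connectP [p hp ->].
by have := gen p u hu hp; rewrite inE.
Qed.

Lemma CAW_connect (V E : finType) (ends : E -> V * V) (C : {ffun E -> bool}) e :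
  has_CAW_through ends C e ->
  exists k, connect (harc ends C) (hd ends C e k) (tl ends C e k).
Proof.
move=> [v0 [s [/and3P [hw /eqP hcl hcy] hin]]].
move: hin => /mapP [[e' y] hin /= He]; subst e'.
case/splitPr: hin hw hcl hcy => s1 s2 hw hcl hcy.
set x := last v0 [seq p.2 | p <- s1].
rewrite is_walk_cat /= -/x in hw; move: hw => /andP [hw1 /andP [hj hw2]].
rewrite map_cat last_cat /= in hcl.
rewrite -(rot_cycle (size s1)) rot_size_cat /= rcons_path in hcy.
move: hcy => /andP [hp halt].
have hw' : is_walk ends y (s2 ++ s1) by rewrite is_walk_cat hw2 hcl.
have ha := walk_awalk hw' hp.
have hc := awalk_connect ha.
have hend : endst C (y, ~~ C e) (s2 ++ s1) = gst C (last (e, y) (s2 ++ s1)).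
  exact: (last_map (gst C) _ (e, y)).
have hx : (last (e, y) (s2 ++ s1)).2 = x.
  by rewrite -(last_map snd) /= map_cat last_cat hcl.
have [k [h1 h2]] := joins_arc C hj.
exists k; rewrite h1 h2; move: hc; rewrite hend /gst hx.
by move: halt => /=; case: (C e); case: (C _) => //.
Qed.

Lemma connect_CAW (V E : finType) (ends : E -> V * V) (C : {ffun E -> bool}) e k :
  connect (harc ends C) (hd ends C e k) (tl ends C e k) -> has_CAW_through ends C e.
Proof.
set a := tl ends C e k; set b := hd ends C e k.
move=> /connectP [p hp ha].
have [s [hs he]] := path_awalk hp.
rewrite -ha in he.
have hb : b = (b.1, ~~ C e) by rewrite {1}(surjective_pairing b) /b hd2.
have he' : a = gst C (last (e, b.1) s).
  by rewrite -he {1}hb; exact: (last_map (gst C) s (e, b.1)).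
exists a.1, ((e, b.1) :: s); split; last by rewrite inE eqxx.
apply/and3P; split.
- rewrite /= tlhd_joins /=; exact: (awalk_walk hs).
- rewrite /= he' /gst /=; apply/eqP; exact: (last_map snd s (e, b.1)).
- rewrite /= rcons_path; apply/andP; split.
    move: hs; rewrite {1}hb => hs; exact: (@awalk_path _ _ ends C s b.1 e b.1 hs).
  have : a.2 = C e by rewrite tl2.
  by rewrite he' /gst /=; case: (C e); case: (C _).
Qed.

Theorem lemma2p5 (V E : finType) (ends : E -> V * V)
  (Hloop : loopless ends) (d : V -> int) (C : {ffun E -> bool})
  (HC : inK ends d C) (e : E) :
  has_CAW_through ends C e ->
  forall C' : {ffun E -> bool}, inK ends d C' -> has_CAW_through ends C' e.
Proof.
move=> /CAW_connect [k hk] C' HC'.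
apply: (@connect_CAW _ _ _ _ e k).
case: (boolP (C' e == C e)) => /eqP hE.
  have -> : hd ends C' e k = hd ends C e k by rewrite /hd hE.
  have -> : tl ends C' e k = tl ends C e k by rewrite /tl hE.
  exact: (transfer_connect Hloop HC HC' hk).
have hE' : C' e = ~~ C e by move: hE; case: (C' e); case: (C e).
have -> : hd ends C' e k = tl ends C e k.
  rewrite /hd /tl hE'; by case: (C e); case: (k).
have -> : tl ends C' e k = hd ends C e k.
  rewrite /hd /tl hE'; by case: (C e); case: (k).
apply: (transfer_connect Hloop HC HC').
apply: connect1; apply/existsP; exists e; apply/existsP; exists k; by rewrite !eqxx.
Qed.
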